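(* For all integers $0\le k\le j$, $$\sum_{h=k}^j(-q)^{h-j}q^{k^2}{h\brack k}_+\,a^{-j}q^{j^2+h^2}\frac{(a^2q^{2-2j-2h};q^2)_j}{(q^2;q^2)_j}{j\brack h}_+=(-q)^{k-j}a^{-j}q^{2k^2+j^2}{j\brack k}_+\frac{(a^2q^{2-2j-2k};q^2)_k}{(q^2;q^2)_k}.$$
   Context: $(x;q^2)_n=\prod_{i=0}^{n-1}(1-xq^{2i})$, $(q^2;q^2)_n=\prod_{i=1}^n(1-q^{2i})$, and ${N\brack k}_+=\frac{(q^2;q^2)_N}{(q^2;q^2)_k(q^2;q^2)_{N-k}}$. (The identity expresses the reduced closure of a top twist applied to the basis web $UP[j,k]$.) *)

(* Defs.v *)
From HB Require Import structures.
From mathcomp Require Import all_boot all_order all_algebra.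
Set Implicit Arguments. Unset Strict Implicit. Unset Printing Implicit Defensive.
Import Order.TTheory GRing.Theory Num.Theory.
Local Open Scope ring_scope.

Definition qpoch2 (F : fieldType) (x q : F) (n : nat) : F :=
  \prod_(i < n) (1 - x * q ^+ (2 * i)).

Definition qfac2 (F : fieldType) (q : F) (n : nat) : F :=
  \prod_(i < n) (1 - q ^+ (2 * i.+1)).

Definition qbinp (F : fieldType) (q : F) (N k : nat) : F :=
  qfac2 q N / (qfac2 q k * qfac2 q (N - k)).

(* Main.v *)
Require Import Defs.
From HB Require Import structures.
From mathcomp Require Import all_boot all_order all_algebra.
From mathcomp Require Import ring zify.
Import Order.TTheory GRing.Theory Num.Theory.
Set Implicit Arguments. Unset Strict Implicit.
Local Open Scope ring_scope.

Section Aux.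
Variable F : fieldType.
Variable q : F.

Fixpoint gb (n m : nat) : F :=
  match n, m with
  | _, 0 => 1
  | 0, _.+1 => 0
  | n'.+1, m'.+1 => gb n' m'.+1 + q ^+ (2 * (n' - m')) * gb n' m'
  end.

Lemma gb_gt n m : (n < m)%N -> gb n m = 0.
Proof.
elim: n m => [|n IH] [|m] //= H.
rewrite !IH //; first by rewrite mulr0 addr0.
by apply: ltnW.
Qed.

Lemma qfac2S n : qfac2 q n.+1 = qfac2 q n * (1 - q ^+ (2 * n.+1)).
Proof. by rewrite /qfac2 big_ord_recr. Qed.

Lemma qfac20 : qfac2 q 0 = 1.
Proof. by rewrite /qfac2 big_ord0. Qed.

Lemma gb_fac n m : (m <= n)%N -> gb n m * qfac2 q m * qfac2 q (n - m) = qfac2 q n.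
Proof.
elim: n m => [|n IH] [|m] //=.
- by rewrite qfac20 !mul1r.
- by rewrite qfac20 !mul1r subn0.
- rewrite ltnS subSS => Hmn.
  case: (ltngtP m n) Hmn => // [Hlt|->] _.
  + have IH1 := IH _ Hlt.
    have IH2 := IH _ (ltnW Hlt).
    set d := (n - m.+1)%N.
    have Hd : (n - m = d.+1)%N by rewrite /d; lia.
    move: IH1 IH2; rewrite Hd qfac2S qfac2S qfac2S => IH1 IH2.
    have -> : q ^+ (2 * n.+1) = q ^+ (2 * m.+1) * q ^+ (2 * d.+1).
      by rewrite -exprD; congr (_ ^+ _); rewrite /d; lia.
    set A := q ^+ (2 * m.+1); set B := q ^+ (2 * d.+1).
    rewrite -/d -/A in IH1; rewrite -/B in IH2.
    have E : forall X Y Z U : F, (X + B * Y) * (Z * (1 - A)) * (U * (1 - B)) =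
      (X * (Z * (1 - A)) * U) * (1 - B) + B * ((Y * Z * (U * (1 - B))) * (1 - A)).
      by move=> *; ring.
    have -> : qfac2 q n * (1 - A * B) = qfac2 q n * (1 - B) + B * (qfac2 q n * (1 - A)) by ring.
    rewrite E; congr (_ * _ + _ * (_ * _)); [exact IH1 | exact IH2].
  + rewrite gb_gt // add0r subnn mul1r qfac20 mulr1 qfac2S.
    have := IH n (leqnn n); rewrite subnn qfac20 mulr1 => E.
    by rewrite mulrA E.
Qed.

Lemma qfac2_neq0 j n : (forall i : nat, (0 < i <= j)%N -> 1 - q ^+ (2 * i) != 0) ->
  (n <= j)%N -> qfac2 q n != 0.
Proof.
move=> H Hn; rewrite /qfac2; apply/prodf_neq0 => i _; apply: H.
apply/andP; split => //; apply: leq_trans Hn; exact: ltn_ord.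
Qed.

Lemma qbinp_gb j n m : (forall i : nat, (0 < i <= j)%N -> 1 - q ^+ (2 * i) != 0) ->
  (m <= n)%N -> (n <= j)%N -> qbinp q n m = gb n m.
Proof.
move=> H Hmn Hnj; rewrite /qbinp -(@gb_fac n m Hmn).
have h1 := @qfac2_neq0 j m H (leq_trans Hmn Hnj).
have h2 : qfac2 q (n - m) != 0 by apply: (@qfac2_neq0 j _ H); apply: leq_trans Hnj; apply: leq_subr.
field; rewrite h1 h2 //.
Qed.

Lemma qfac2_split k n : qfac2 q (k + n) = qfac2 q k * \prod_(i < n) (1 - q ^+ (2 * (k + i).+1)).
Proof.
elim: n => [|n IH]; first by rewrite big_ord0 addn0 mulr1.
by rewrite addnS qfac2S IH big_ord_recr /= mulrA.
Qed.

Lemma gbSS n m : gb n.+1 m.+1 = gb n m.+1 + q ^+ (2 * (n - m)) * gb n m.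
Proof. by []. Qed.
Lemma gb0 n : gb n 0 = 1.
Proof. by case: n. Qed.
End Aux.
Arguments gb : simpl never.

Section T.
Variable F : fieldType.
Variable q : F.
Hypothesis hq : q != 0.

Definition ww := (q ^+ 2)^-1.
Definition cT k m := (-q) ^+ m * q ^+ (m ^ 2) * q ^+ (2 * k * m).

Lemma qpoch2S x N : qpoch2 x q N.+1 = qpoch2 x q N * (1 - x * q ^+ (2 * N)).
Proof. by rewrite /qpoch2 big_ord_recr. Qed.

Lemma qpoch2Sl x N : qpoch2 x q N.+1 = (1 - x) * qpoch2 (x * q ^+ 2) q N.
Proof.
rewrite /qpoch2 big_ord_recl /= muln0 expr0 mulr1; congr (_ * _).
apply: eq_bigr => i _; rewrite /bump /= add1n mulnS exprD mulrA //.
Qed.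

Lemma wwq : ww * q ^+ 2 = 1.
Proof. by rewrite /ww mulVf // expf_neq0. Qed.

Lemma cTS k m : cT k m.+1 = - (cT k m * q ^+ (2 * (k + m).+1)).
Proof.
rewrite /cT exprS.
have -> : (m.+1 ^ 2 = m ^ 2 + 2 * m + 1)%N by rewrite !expnS expn0; lia.
have -> : (2 * k * m.+1 = 2 * k * m + 2 * k)%N by lia.
have -> : (2 * (k + m).+1 = 2 * k + 2 * m + 1 + 1)%N by lia.
rewrite !exprD expr1; ring.
Qed.

Lemma T_rec k n z :
  \sum_(m < n.+1) cT k m * gb q n m * qpoch2 (z * ww ^+ m) q (n + k)
  = qpoch2 z q k * \prod_(i < n) (1 - q ^+ (2 * (k + i).+1)).
Proof.
elim: n => [|n IH].
  by rewrite big_ord1 big_ord0 /cT /= !expr0 !mulr1 muln0 expr0 !mul1r add0n.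
rewrite [in RHS]big_ord_recr /= mulrA -IH mulr_suml.
rewrite big_ord_recl /= gb0.
have bump0 : forall i, bump 0 i = i.+1 by [].
under eq_bigr => i _ do rewrite bump0 gbSS mulrDr mulrDl.
rewrite big_split /= addrA.
have -> : cT k 0 * 1 * qpoch2 (z * ww ^+ 0) q (n.+1 + k) +
   \sum_(i < n.+1) cT k i.+1 * gb q n i.+1 * qpoch2 (z * ww ^+ i.+1) q (n.+1 + k)
   = \sum_(i < n.+2) cT k i * gb q n i * qpoch2 (z * ww ^+ i) q (n.+1 + k).
  by rewrite [RHS]big_ord_recl /= gb0.
rewrite big_ord_recr /= gb_gt // mulr0 mul0r addr0 -big_split /=.
apply: eq_bigr => i _.
have Hi : (i <= n)%N by rewrite -ltnS ltn_ord.
rewrite addSn qpoch2S qpoch2Sl cTS.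
have -> : z * ww ^+ i.+1 * q ^+ 2 = z * ww ^+ i by rewrite exprSr -!mulrA wwq mulr1.
have -> : (2 * (k + n).+1 = 2 * (k + i).+1 + 2 * (n - i))%N by lia.
have hA : z * ww ^+ i * q ^+ (2 * (n + k)) = q ^+ (2 * (k + i).+1) * q ^+ (2 * (n - i)) * (z * ww ^+ i.+1).
  rewrite -exprD exprSr.
  have -> : (2 * (k + i).+1 + 2 * (n - i) = 2 * (n + k) + 2)%N by lia.
  rewrite exprD.
  have -> : q ^+ (2 * (n + k)) * q ^+ 2 * (z * (ww ^+ i * ww)) = z * ww ^+ i * q ^+ (2 * (n + k)) * (ww * q ^+ 2) by ring.
  by rewrite wwq mulr1.
rewrite hA exprD; ring.
Qed.
End T.

Unset Implicit Arguments.

Theorem mainTheorem7 (F : fieldType) (a q : F) (j k : nat)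
  (ha : a != 0) (hq : q != 0)
  (hqj : forall i : nat, (0 < i <= j)%N -> 1 - q ^+ (2 * i) != 0)
  (hkj : (k <= j)%N) :
  \sum_(k <= h < j.+1)
     ((- q) ^ (h%:Z - j%:Z) * q ^+ (k ^ 2) * qbinp q h k
      * a ^- j * q ^+ (j ^ 2 + h ^ 2)
      * (qpoch2 (a ^+ 2 * q ^ (2%:Z - 2%:Z * j%:Z - 2%:Z * h%:Z)) q j / qfac2 q j)
      * qbinp q j h)
  = (- q) ^ (k%:Z - j%:Z) * a ^- j * q ^+ (2 * k ^ 2 + j ^ 2) * qbinp q j k
      * (qpoch2 (a ^+ 2 * q ^ (2%:Z - 2%:Z * j%:Z - 2%:Z * k%:Z)) q k / qfac2 q k).
Proof.
set z := a ^+ 2 * q ^ (2%:Z - 2%:Z * j%:Z - 2%:Z * k%:Z).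
have [n Hn] : exists n, j = (k + n)%N by exists (j - k)%N; lia.
have hfac : forall i, (i <= j)%N -> qfac2 q i != 0 by move=> i; apply: qfac2_neq0 hqj.
have hnq : - q != 0 by rewrite oppr_eq0.
set K := (- q) ^ (k%:Z - j%:Z) * a ^- j * q ^+ (2 * k ^ 2 + j ^ 2) * qbinp q j k / qfac2 q j.
rewrite -{1}(add0n k) big_addn.
have -> : (j.+1 - k = n.+1)%N by lia.
rewrite big_mkord.
transitivity (K * \sum_(m < n.+1) cT q k m * gb q n m * qpoch2 (z * ww q ^+ m) q (n + k)).
  rewrite mulr_sumr; apply: eq_bigr => m _.
  have Hm : (m <= n)%N by rewrite -ltnS ltn_ord.
  have Hmj : (m + k <= j)%N by rewrite Hn; lia.
  have e1 : ((m + k)%N%:Z - j%:Z = m%:Z + (k%:Z - j%:Z))%R by lia.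
  rewrite e1 (expfzDr m%:Z (k%:Z - j%:Z) hnq) -(exprnP (- q) m).
  have e2 : (2%:Z - 2%:Z * j%:Z - 2%:Z * (m + k)%N%:Z =
     (2%:Z - 2%:Z * j%:Z - 2%:Z * k%:Z) + - ((2 * m)%N%:Z))%R by lia.
  rewrite e2 (expfzDr (2%:Z - 2%:Z * j%:Z - 2%:Z * k%:Z) (- ((2 * m)%N%:Z)) hq) -exprz_inv -(exprnP q^-1) [a ^+ 2 * _]mulrA -/z.
  have ew : ww q ^+ m = q^-1 ^+ (2 * m) by rewrite /ww exprVn -exprM exprVn.
  rewrite ew (addnC n k) -Hn.
  have hb1 : qbinp q (m + k) k != 0.
    rewrite /qbinp; apply: mulf_neq0; first by apply: hfac.
    rewrite invr_neq0 // mulf_neq0 //; apply: hfac; lia.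
  have eb : qbinp q j (m + k) = qbinp q j k * gb q n m / qbinp q (m + k) k.
    rewrite -(qbinp_gb hqj Hm); last by lia.
    rewrite /qbinp.
    have -> : (m + k - k = m)%N by lia.
    have -> : (j - (m + k) = n - m)%N by lia.
    have -> : (j - k = n)%N by lia.
    have h1 := hfac m ltac:(lia).
    have h2 := hfac (n - m)%N ltac:(lia).
    have h3 := hfac n ltac:(lia).
    have h4 := hfac k ltac:(lia).
    have h5 := hfac (m + k)%N ltac:(lia).
    field.
    by rewrite h1 h2 h3 h4 h5.
  rewrite eb.
  have -> : q ^+ (j ^ 2 + (m + k) ^ 2) = q ^+ (j ^ 2) * q ^+ (k ^ 2) * q ^+ (m ^ 2) * q ^+ (2 * k * m).
    by rewrite -!exprD; congr (_ ^+ _); rewrite !expnS !expn0; lia.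
  rewrite /K /cT.
  have -> : q ^+ (2 * k ^ 2 + j ^ 2) = q ^+ (k ^ 2) * q ^+ (k ^ 2) * q ^+ (j ^ 2).
    by rewrite -!exprD; congr (_ ^+ _); lia.
  field.
  by rewrite hfac // expf_neq0 // hb1.
rewrite T_rec // /K.
have -> : qfac2 q j = qfac2 q k * \prod_(i < n) (1 - q ^+ (2 * (k + i).+1)) by rewrite Hn qfac2_split.
have hk := hfac k hkj.
have hj := hfac j (leqnn j).
rewrite Hn qfac2_split in hj.
have hP : \prod_(i < n) (1 - q ^+ (2 * (k + i).+1)) != 0.
  by apply: contraNneq hj => ->; rewrite mulr0.
field.
by rewrite hk hP expf_neq0.
Qed.
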